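(* Let $\mathcal{G}$ be a causal graph over a finite set $\mathbf{V}$ of variables with target variable $Y \in \mathbf{V}$ and set of intervenable variables $\mathbf{I} \subseteq \mathbf{V}\setminus\{Y\}$. Suppose that (i) there exists $C \in \mathrm{pa}_{\mathcal{G}}(Y)$ with $C \notin \mathbf{I}$, or (ii) there exists $C \in \mathrm{sp}_{\mathcal{G}}(Y)$. If there exists $X \in \mathrm{an}_{\mathcal{G}}(Y) \cap \mathbf{I}$ such that $\{\langle X, \{C\}\rangle\}$ is a mixed policy scope for $\mathcal{G}$, then there exists at least one structural causal model compatible with $\mathcal{G}$ for which $$\min_{\mathcal{S} \in \Sigma_{\text{hard}},\, \pi_{\mathcal{S}} \in \Pi_{\mathcal{S}}} \mu^Y_{\pi_{\mathcal{S}}} \;>\; \min_{\mathcal{S} \in \Sigma,\, \pi_{\mathcal{S}} \in \Pi_{\mathcal{S}}} \mu^Y_{\pi_{\mathcal{S}}}.$$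
   Context: A structural causal model (SCM) is a tuple $\mathcal{M}=\langle \mathbf{V}, \mathbf{U}, \mathcal{F}, p(\mathbf{U})\rangle$ where $\mathbf{U}$ is a set of mutually independent unobserved exogenous random variables with distribution $p(\mathbf{U})$ and $\mathcal{F}=\{f_V\}_{V\in\mathbf{V}}$ are deterministic functions with $V = f_V(\mathrm{pa}(V), \mathbf{U}_V)$, $\mathrm{pa}(V)\subseteq \mathbf{V}\setminus\{V\}$, $\mathbf{U}_V\subseteq\mathbf{U}$. Its causal graph has nodes $\mathbf{V}$, a directed edge $V\to W$ if $V\in\mathrm{pa}(W)$, and a bidirected edge $V\leftrightarrow W$ if $\mathbf{U}_V\cap\mathbf{U}_W\neq\emptyset$; causal graphs are assumed acyclic (no directed cycles). An SCM is compatible with a causal graph $\mathcal{G}$ over $\mathbf{V}$ if every edge of its causal graph is in $\mathcal{G}$. $\mathrm{pa}_{\mathcal{G}}(V)$, $\mathrm{an}_{\mathcal{G}}(V)$ denote parents and ancestors (nodes with a directed path to $V$) in $\mathcal{G}$; $\mathrm{sp}_{\mathcal{G}}(V)$ denotes nodes joined to $V$ by a bidirected edge. $\mathcal{R}_X$ denotes the range of $X$. A mixed policy scope (MPS) $\mathcal{S}$ for $\mathcal{G}$ is a collection of pairs $\langle X, \mathbf{C}_X\rangle$ with $X\in\mathbf{I}$, $\mathbf{C}_X\subseteq\mathbf{V}\setminus\{X,Y\}$, such that the graph obtained from $\mathcal{G}$ by removing all incoming edges into $X$ and adding directed edges from each element of $\mathbf{C}_X$ to $X$, for every pair in $\mathcal{S}$,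 is acyclic. $\Sigma$ is the set of all MPSs for $\mathcal{G}$ and $\Sigma_{\text{hard}}=\{\mathcal{S}\in\Sigma: \mathbf{C}_X=\emptyset \text{ for all } \langle X,\mathbf{C}_X\rangle\in\mathcal{S}\}$. A deterministic mixed policy (DMP) $\pi_{\mathcal{S}}$ compatible with $\mathcal{S}$ assigns to each $\langle X,\mathbf{C}_X\rangle\in\mathcal{S}$ a function $\pi_{X|\mathbf{C}_X}:\mathcal{R}_{\mathbf{C}_X}\to\mathcal{R}_X$ (a constant value in $\mathcal{R}_X$ when $\mathbf{C}_X=\emptyset$); $\Pi_{\mathcal{S}}$ is the set of such DMPs. Applying $\pi_{\mathcal{S}}$ to an SCM replaces each $f_X$ by $\pi_{X|\mathbf{C}_X}$ (so $X=\pi_{X|\mathbf{C}_X}(\mathbf{C}_X)$), yielding the interventional distribution $p_{\pi_{\mathcal{S}}}(\mathbf{V})$; the target effect is $\mu^Y_{\pi_{\mathcal{S}}}=\mathbb{E}_{p_{\pi_{\mathcal{S}}}}[Y]$. *)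

(* Defs.v *)
From HB Require Import structures.
From mathcomp Require Import all_boot all_order all_algebra.
From mathcomp Require Import reals.
Set Implicit Arguments. Unset Strict Implicit. Unset Printing Implicit Defensive.
Import Order.TTheory GRing.Theory Num.Theory.
Local Open Scope ring_scope.

(* A graph over V with directed edges [de w v] (w -> v) and bidirected
   edges [be v w] (v <-> w). *)
Record graph (V : finType) := Graph { de : rel V; be : rel V }.

Definition acyclic (V : finType) (e : rel V) : Prop :=
  forall (x : V) (p : seq V), path e x p -> last x p = x -> p = [::].

Definition causal_graph (V : finType) (G : graph V) : Prop :=
  [/\ acyclic (de G), symmetric (be G) & irreflexive (be G)].

(* Structural causal model with finitely many mutually independent exogenous
   variables (each with a finite distribution) and endogenous variables taking
   values in finite ranges [rng v] of reals. *)
Record SCM (V : finType) (R : realType) := MkSCM {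
  exo : finType;
  exoval : finType;
  pU : exo -> exoval -> R;
  pU_ge0 : forall e a, 0 <= pU e a;
  pU_sum1 : forall e, \sum_a pU e a = 1;
  rng : V -> seq R;
  pa : rel V;                              (* pa w v : w is a parent of v *)
  uscope : V -> {set exo};
  f : V -> (V -> R) -> {ffun exo -> exoval} -> R;
  pa_irr : forall v, ~~ pa v v;
  f_dep : forall (v : V) (x x' : V -> R) (u u' : {ffun exo -> exoval}),
    (forall w, pa w v -> x w = x' w) ->
    (forall e, e \in uscope v -> u e = u' e) ->
    f v x u = f v x' u';
  f_rng : forall v x u, f v x u \in rng v
}.

Definition compatible (V : finType) (R : realType) (G : graph V) (M : SCM V R) : Prop :=
  (forall w v, @pa _ _ M w v -> de G w v) /\
  (forall v w, v != w ->
     [exists e, (e \in @uscope _ _ M v) && (e \in @uscope _ _ M w)] -> be G v w).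

(* A mixed policy scope: S X = Some C_X  iff  <X, C_X> \in S. *)
Definition mps (V : finType) := {ffun V -> option {set V}}.

Definition mps_graph (V : finType) (G : graph V) (S : mps V) : rel V :=
  fun w v => match S v with Some C => w \in C | None => de G w v end.

Definition is_MPS (V : finType) (G : graph V) (I : {set V}) (Y : V) (S : mps V) : Prop :=
  (forall X C, S X = Some C -> [/\ X \in I, X \notin C & Y \notin C]) /\
  acyclic (mps_graph G S).

Definition is_hard (V : finType) (S : mps V) : Prop :=
  forall X C, S X = Some C -> C = set0.

Definition is_DMP (V : finType) (R : realType) (M : SCM V R) (S : mps V)
  (pol : V -> (V -> R) -> R) : Prop :=
  forall X C, S X = Some C ->
    (forall x x', {in C, x =1 x'} -> pol X x = pol X x') /\
    (forall x, pol X x \in @rng _ _ M X).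

(* The (unique, by acyclicity) solution of the intervened system for
   exogenous value u, obtained by #|V| rounds of recursive evaluation. *)
Definition solve (V : finType) (R : realType) (M : SCM V R) (S : mps V)
  (pol : V -> (V -> R) -> R) (u : {ffun exo M -> exoval M}) : V -> R :=
  iter #|V| (fun x v => match S v with Some _ => pol v x | None => @f _ _ M v x u end)
       (fun _ => 0).

Definition mu (V : finType) (R : realType) (M : SCM V R) (S : mps V)
  (pol : V -> (V -> R) -> R) (Y : V) : R :=
  \sum_(u : {ffun exo M -> exoval M}) (\prod_e @pU _ _ M e (u e)) * @solve _ _ M S pol u Y.

Definition is_min (R : realType) (P : R -> Prop) (m : R) : Prop :=
  P m /\ forall r, P r -> m <= r.

(* Main.v *)
Require Import Defs.
From HB Require Import structures.
From mathcomp Require Import all_boot all_order all_algebra.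
From mathcomp Require Import reals.
From mathcomp Require Import lra.
Set Implicit Arguments. Unset Strict Implicit. Unset Printing Implicit Defensive.
Import Order.TTheory GRing.Theory Num.Theory.
Local Open Scope ring_scope.

Definition bitR (R : realType) (c : bool) : R := if c then 1 else 0.

Definition mpred (V : finType) (X : V) (p : seq V) (v : V) : V :=
  nth X (X :: p) (index v p).

Definition mpa (V : finType) (X : V) (p : seq V) (Y C : V) (b : bool) : rel V :=
  fun w v => if v == Y then (w == mpred X p v) || (b && (w == C))
             else (v \in p) && (w == mpred X p v).

Definition mus (V : finType) (Y C : V) (b : bool) (v : V) : {set unit} :=
  if (v == C) || ((v == Y) && ~~ b) then [set tt] else set0.

Definition mf (V : finType) (R : realType) (X : V) (p : seq V) (Y C : V) (b : bool)
  (v : V) (x : V -> R) (u : {ffun unit -> bool}) : R :=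
  if v == Y then (if x (mpred X p v) == (if b then x C else bitR R (u tt)) then 0 else 1)
  else if v == C then bitR R (u tt)
  else if v \in p then (if x (mpred X p v) == 1 then 1 else 0) else 0.

Lemma mpred_neq (V : finType) (X : V) (p : seq V) v :
  uniq (X :: p) -> v \in p -> mpred X p v != v.
Proof.
move=> hu vp; rewrite /mpred.
have hi : (index v p < size p)%N by rewrite index_mem.
rewrite -{2}(nth_index X vp).
move: hi; set i := index v p => hi.
change (nth X (X :: p) i != nth X (X :: p) i.+1).
rewrite nth_uniq //=; first by elim: i {hi}.
by rewrite ltnS ltnW.
Qed.

Lemma mpa_irr (V : finType) (X : V) (p : seq V) (Y C : V) (b : bool) :
  uniq (X :: p) -> Y \in p -> C != Y -> forall v, ~~ mpa X p Y C b v v.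
Proof.
move=> hu hY hCY v; rewrite /mpa; case: ifP => [/eqP ->|_].
  by rewrite negb_or eq_sym (mpred_neq hu hY) /= negb_and [Y == C]eq_sym (negbTE hCY) orbT.
by rewrite negb_and; case vp: (v \in p) => //=; rewrite eq_sym (mpred_neq hu vp).
Qed.

Lemma mf_dep (V : finType) (R : realType) (X : V) (p : seq V) (Y C : V) (b : bool) :
  C != Y -> forall (v : V) (x x' : V -> R) (u u' : {ffun unit -> bool}),
    (forall w, mpa X p Y C b w v -> x w = x' w) ->
    (forall e, e \in mus Y C b v -> u e = u' e) ->
    mf X p Y C b v x u = mf X p Y C b v x' u'.
Proof.
move=> hCY v x x' u u' hx hu; rewrite /mf.
case: ifP => [/eqP eY|nY].
  have h1 : x (mpred X p v) = x' (mpred X p v).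
    by apply: hx; rewrite /mpa eY eqxx eqxx.
  rewrite h1; case: b hx hu => hx hu.
    by rewrite (hx C) // /mpa eY eqxx eqxx orbT.
  by rewrite (hu tt) // /mus eY eqxx orbT in_set1.
case: ifP => [eC|nC]; first by rewrite (hu tt) // /mus eC in_set1.
case: ifP => [vp|//]; by rewrite hx // /mpa nY vp eqxx.
Qed.

Lemma mf_rng (V : finType) (R : realType) (X : V) (p : seq V) (Y C : V) (b : bool)
  v (x : V -> R) u : mf X p Y C b v x u \in [:: 0; 1].
Proof.
rewrite /mf /bitR; repeat case: ifP => _; by rewrite !inE eqxx ?orbT.
Qed.

Lemma pU_sum1' (R : realType) (e : unit) : \sum_(a : bool) (fun _ _ => 1/2 : R) e a = 1.
Proof. rewrite big_bool /=; lra. Qed.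

Lemma pU_ge0' (R : realType) (e : unit) (a : bool) : 0 <= (fun _ _ => 1/2 : R) e a.
Proof. rewrite /=; lra. Qed.

Definition mkM (V : finType) (R : realType) (X : V) (p : seq V) (Y C : V) (b : bool)
  (hu : uniq (X :: p)) (hY : Y \in p) (hCY : C != Y) : SCM V R :=
  @MkSCM V R unit bool (fun _ _ => 1/2) (@pU_ge0' R) (@pU_sum1' R)
    (fun _ => [:: 0; 1]) (mpa X p Y C b) (mus Y C b) (@mf V R X p Y C b)
    (mpa_irr b hu hY hCY) (@mf_dep V R X p Y C b hCY) (@mf_rng V R X p Y C b).
Definition Fm (V : finType) (R : realType) (X : V) (p : seq V) (Y C : V) (b : bool)
  (S : mps V) (pol : V -> (V -> R) -> R) (u : {ffun unit -> bool}) (x : V -> R) (v : V) : R :=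
  match S v with Some _ => pol v x | None => mf X p Y C b v x u end.

Lemma FmS (V : finType) (R : realType) (X : V) (p : seq V) (Y C : V) (b : bool)
  (S : mps V) (pol : V -> (V -> R) -> R) u x v D :
  S v = Some D -> Fm X p Y C b S pol u x v = pol v x.
Proof. by rewrite /Fm => ->. Qed.

Lemma FmN (V : finType) (R : realType) (X : V) (p : seq V) (Y C : V) (b : bool)
  (S : mps V) (pol : V -> (V -> R) -> R) u x v :
  S v = None -> Fm X p Y C b S pol u x v = mf X p Y C b v x u.
Proof. by rewrite /Fm => ->. Qed.

Lemma mpred_mem (V : finType) (X : V) (p : seq V) v :
  v \in p -> mpred X p v \in X :: p.
Proof.
move=> vp; rewrite /mpred mem_nth //= ltnS ltnW // index_mem //.
Qed.

Lemma mpred_neqY (V : finType) (X : V) (p : seq V) (Y : V) v :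
  uniq (X :: p) -> Y = last X p -> v \in p -> mpred X p v != Y.
Proof.
move=> hu hY vp; rewrite hY /mpred.
have -> : last X p = nth X (X :: p) (size p) by rewrite -[size p]/((size (X :: p)).-1) nth_last.
rewrite nth_uniq //=; last by rewrite ltnS ltnW // index_mem.
by rewrite neq_ltn index_mem vp.
Qed.
Arguments FmN {V R X p Y C b S pol u x v}.
Arguments FmS {V R X p Y C b S pol u x v D}.

Unset Implicit Arguments.
Theorem proposition1 (V : finType) (R : realType) (G : graph V) (Y : V) (I : {set V}) :
  causal_graph G -> Y \notin I ->
  (exists (C X : V),
     ((de G C Y && (C \notin I)) || be G C Y) /\
     X \in I /\ connect (de G) X Y /\
     is_MPS G I Y [ffun v => if v == X then Some [set C] else None]) ->
  exists M : SCM V R, compatible G M /\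
    exists m_hard m_all : R,
      is_min (fun r => exists (S : mps V) pol,
                [/\ is_MPS G I Y S, is_hard S, is_DMP M S pol & r = mu M S pol Y]) m_hard /\
      is_min (fun r => exists (S : mps V) pol,
                [/\ is_MPS G I Y S, is_DMP M S pol & r = mu M S pol Y]) m_all /\
      m_all < m_hard.
Proof.
move=> [acyc bsym birr] YnI [C [X [hC [XI [cXY hMPS]]]]].
set S1 : mps V := [ffun v => if v == X then Some [set C] else None] in hMPS.
have [hS1a hS1acyc] := hMPS.
have h1 : S1 X = Some [set C] by rewrite /S1 ffunE eqxx.
have [_ XnC YnC] := hS1a X [set C] h1.
rewrite !in_set1 in XnC YnC.
have XneY : X != Y by apply/eqP => e; rewrite -e XI in YnI.
case/connectP: cXY => p0 pth0.
case: (shortenP pth0) => p pth hu _ Yl.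
have Yp : Y \in p.
  have := mem_last X p; rewrite -Yl inE => /orP [/eqP e|//].
  by rewrite e eqxx in XneY.
have CnXp : C \notin X :: p.
  rewrite inE negb_or eq_sym XnC /=; apply/negP => Cp.
  have lift : forall q x, path (de G) x q -> X \notin q -> path (mps_graph G S1) x q.
    elim=> [|z q IH] x //= /andP [e pq]; rewrite inE negb_or => /andP [zX qX].
    by rewrite IH // andbT /mps_graph ffunE eq_sym (negbTE zX).
  move: pth hu; case/splitPr: Cp => q1 q2 pth hu.
  have pq : path (de G) X (rcons q1 C).
    by move: pth; rewrite -cats1 !cat_path /= => /andP [-> /andP [-> _]].
  have Xq : X \notin rcons q1 C.
    move: hu; rewrite /= mem_cat inE negb_or => /andP [/andP [k1 k2] _].
    by rewrite -cats1 mem_cat inE negb_or k1 XnC.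
  have := hS1acyc X (rcons (rcons q1 C) X).
  rewrite rcons_path lift //= last_rcons /mps_graph ffunE eqxx in_set1 eqxx.
  move=> /(_ isT (last_rcons _ _ _)) /(congr1 size); by rewrite size_rcons.
set b := de G C Y && (C \notin I).
have CneY : C != Y by rewrite eq_sym.
exists (@mkM V R X p Y C b hu Yp CneY).
split.
  split.
    move=> w v /=; rewrite /mpa; case: ifP => [/eqP -> | _].
      case/orP => [/eqP -> | /andP [hb /eqP ->]]; last by case/andP: hb.
      have := (pathP X pth) (index Y p); rewrite index_mem Yp nth_index //.
      by move=> /(_ isT).
    case/andP => vp /eqP ->.
    have := (pathP X pth) (index v p); rewrite index_mem vp nth_index //.
    by move=> /(_ isT).
  move=> v w vw /existsP [e /andP [ev ew]]; move: ev ew; rewrite /= /mus.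
  case: ifP => hv; last by rewrite in_set0.
  case: ifP => hw; last by rewrite in_set0.
  move=> _ _.
  have hbe : ~~ b -> be G C Y by move=> nb; move: hC; rewrite -/b (negbTE nb).
  case/orP: hv => [/eqP ev | /andP [/eqP ev nb]]; case/orP: hw => [/eqP ew | /andP [/eqP ew nb']].
  - by rewrite ev ew eqxx in vw.
  - by rewrite ev ew hbe.
  - by rewrite ev ew bsym hbe.
  - by rewrite ev ew eqxx in vw.
set M := @mkM V R X p Y C b hu Yp CneY.
set K : R := \prod_(e : unit) (1/2 : R).
have Kpos : 0 < K by apply: prodr_gt0 => e _; lra.
have muE : forall S pol, mu M S pol Y =
    \sum_(u : {ffun unit -> bool}) K * iter #|V| (Fm X p Y C b S pol u) (fun _ => 0) Y.
  by [].
have step : forall (S : mps V) (pol : V -> (V -> R) -> R) (u : {ffun unit -> bool}) m v, iter m.+1 (Fm X p Y C b S pol u) (fun _ => 0) v =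
    Fm X p Y C b S pol u (iter m (Fm X p Y C b S pol u) (fun _ => 0)) v by [].
have cardV : ((size p).+2 <= #|V|)%N.
  have := max_card (mem (C :: X :: p)).
  by rewrite (card_uniqP _) //= CnXp.
move: cardV; case EV: #|V| => [|[|n]] //; rewrite !ltnS => hpn.
have SY : forall S : mps V, is_MPS G I Y S -> S Y = None.
  move=> S [hS _]; case E: (S Y) => [D|] //.
  by have [hy _ _] := hS _ _ E; rewrite hy in YnI.
have Cval : forall (S : mps V) (pol : V -> (V -> R) -> R) (u : {ffun unit -> bool}) m, S C = None ->
    iter m.+1 (Fm X p Y C b S pol u) (fun _ => 0) C = bitR R (u tt).
  by move=> S pol u m hSC; rewrite step (FmN hSC) /mf (negbTE CneY) eqxx.
have Yval : forall (S : mps V) (pol : V -> (V -> R) -> R) (u : {ffun unit -> bool}), is_MPS G I Y S ->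
    iter #|V| (Fm X p Y C b S pol u) (fun _ => 0) Y =
    if iter n.+1 (Fm X p Y C b S pol u) (fun _ => 0) (mpred X p Y) ==
      (if b then iter n.+1 (Fm X p Y C b S pol u) (fun _ => 0) C else bitR R (u tt)) then 0 else 1.
  by move=> S pol u hS; rewrite EV step (FmN (SY S hS)) /mf eqxx.
have Yge0 : forall (S : mps V) (pol : V -> (V -> R) -> R) (u : {ffun unit -> bool}), is_MPS G I Y S ->
    0 <= iter #|V| (Fm X p Y C b S pol u) (fun _ => 0) Y.
  by move=> S pol u hS; rewrite (Yval S pol u hS); case: ifP => _ //; exact: ler01.
have predC : forall v, v \in p -> mpred X p v != C.
  move=> v vp; apply/eqP => e; have := mpred_mem X vp; rewrite e.
  by rewrite (negbTE CnXp).
have predY : forall v, v \in p -> mpred X p v != Y.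
  by move=> v vp; apply: mpred_neqY.
exists K, 0; split; last split => //.
-
  split.
    pose S0 : mps V := [ffun _ => None].
    pose pol0 : V -> (V -> R) -> R := fun _ _ => 0.
    have hS0 : is_MPS G I Y S0.
      split; first by move=> ? ?; rewrite ffunE.
      move=> x q; have e : mps_graph G S0 =2 de G by move=> ? ?; rewrite /mps_graph ffunE.
      rewrite (eq_path e); exact: acyc.
    exists S0, pol0; split => //; first by move=> ? ?; rewrite ffunE.
      by move=> ? ?; rewrite ffunE.
    have z : forall m u v, v != C -> v != Y -> iter m (Fm X p Y C b S0 pol0 u) (fun _ => 0) v = 0.
      elim=> [|m IH] u v vC vY //.
      rewrite step FmN ?ffunE // /mf (negbTE vY) (negbTE vC).
      case: ifP => // vp; rewrite IH ?predC ?predY //.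
      by rewrite eq_sym oner_eq0.
    rewrite muE.
    pose uT : {ffun unit -> bool} := [ffun _ => true].
    rewrite (bigD1 uT) //= big1 ?addr0.
      rewrite Yval // z ?predC ?predY //.
      have -> : (if b then iter n.+1 (Fm X p Y C b S0 pol0 uT) (fun=> 0) C else bitR R (uT tt)) = bitR R (uT tt).
        by case: ifP => _ //; rewrite Cval // ffunE.
      by rewrite ffunE /bitR eq_sym oner_eq0 mulr1.
    move=> u nu; rewrite Yval // z ?predC ?predY //.
    have -> : (if b then iter n.+1 (Fm X p Y C b S0 pol0 u) (fun=> 0) C else bitR R (u tt)) = bitR R (u tt).
      by case: ifP => _ //; rewrite Cval // ffunE.
    case E: (u tt); last by rewrite /bitR eqxx mulr0.
    case/eqP: nu; apply/ffunP => -[]; by rewrite !ffunE.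
  move=> r [S [pol [hS hard hD ->]]].
  have hSC : b -> S C = None.
    move=> hb; case E: (S C) => [D|] //; have [hc _ _] := hS.1 _ _ E.
    by move: hb; rewrite /b hc andbF.
  have ind : forall m u u' v, v != C -> v != Y ->
      iter m (Fm X p Y C b S pol u) (fun _ => 0) v = iter m (Fm X p Y C b S pol u') (fun _ => 0) v.
    elim=> [|m IH] u u' v vC vY //; rewrite !step.
    case E: (S v) => [D|].
      rewrite !(FmS E); apply: (hD v D E).1 => z; by rewrite (hard v D E) in_set0.
    rewrite !(FmN E) /mf (negbTE vY) (negbTE vC); case: ifP => // vp.
    by rewrite (IH u u') ?predC ?predY.
  pose q u := iter n.+1 (Fm X p Y C b S pol u) (fun _ => 0) (mpred X p Y).
  have Yv : forall u, iter #|V| (Fm X p Y C b S pol u) (fun _ => 0) Y =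
      if q u == bitR R (u tt) then 0 else 1.
    move=> u; rewrite Yval //.
    have -> : (if b then iter n.+1 (Fm X p Y C b S pol u) (fun _ => 0) C else bitR R (u tt))
       = bitR R (u tt) by case: ifP => hb //; rewrite Cval // hSC.
    by [].
  pose q0 := q [ffun _ => true].
  have qE : forall u, q u = q0 by move=> u; rewrite /q0 /q (ind _ u [ffun _ => true]) ?predC ?predY.
  pose us : {ffun unit -> bool} := [ffun _ => q0 != 1].
  rewrite muE (bigD1 us) //.
  have -> : iter #|V| (Fm X p Y C b S pol us) (fun _ => 0) Y = 1.
    rewrite Yv qE ffunE; case: (eqVneq q0 1) => h; rewrite /bitR.
      by rewrite h /= oner_eq0.
    by rewrite /= (negbTE h).
  rewrite mulr1 lerDl; apply: sumr_ge0 => u _; apply: mulr_ge0; [exact: ltW | exact: Yge0].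
- split.
    pose pol1 : V -> (V -> R) -> R := fun _ x => if x C == 1 then 1 else 0.
    exists S1, pol1; split => //.
      move=> Z D; rewrite /S1 ffunE; case: ifP => // _ [<-]; split.
        by move=> x x' h; rewrite /pol1 (h C) // in_set1.
      by move=> x; rewrite /pol1 /=; case: ifP; rewrite !inE eqxx ?orbT.
    rewrite muE; apply/esym; apply: big1 => u _.
    have S1C : S1 C = None by rewrite /S1 ffunE eq_sym (negbTE XnC).
    have C1 : forall m, iter m.+1 (Fm X p Y C b S1 pol1 u) (fun _ => 0) C = bitR R (u tt).
      by move=> m; apply: Cval.
    have bitb : forall c, (if bitR R c == 1 then 1 else 0) = bitR R c.
      by case; rewrite /bitR ?eqxx // eq_sym oner_eq0.
    have hup : uniq p by move: (hu) => /andP [].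
    have Xnp : X \notin p by move: (hu) => /andP [].
    have pc : forall j, (j < size p)%N -> forall m, (j.+2 <= m)%N ->
        iter m (Fm X p Y C b S1 pol1 u) (fun _ => 0) (nth X (X :: p) j) = bitR R (u tt).
      elim=> [|j IH] hj [|[|m]] // hm.
        by rewrite step -[nth X (X :: p) 0]/X (FmS h1) /pol1 C1 bitb.
      have vp : nth X (X :: p) j.+1 \in p by rewrite /= mem_nth // ltnW.
      have vX : S1 (nth X (X :: p) j.+1) = None.
        rewrite /S1 ffunE; case: ifP => // /eqP e; by rewrite -e vp in Xnp.
      have vY : (nth X (X :: p) j.+1 == Y) = false.
        rewrite Yl.
        have -> : last X p = nth X (X :: p) (size p) by rewrite -[size p]/((size (X :: p)).-1) nth_last.
        rewrite nth_uniq //= ?ltnS ?(ltnW hj) //.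
        by rewrite ltn_eqF.
      have vC : (nth X (X :: p) j.+1 == C) = false.
        apply/negP => /eqP e; move: CnXp; by rewrite -e inE vp orbT.
      rewrite step (FmN vX) /mf vY vC vp.
      have -> : mpred X p (nth X (X :: p) j.+1) = nth X (X :: p) j.
        by rewrite /mpred /= index_uniq // ltnW.
      by rewrite IH ?bitb // ltnW.
    have idx : index Y p = (size p).-1.
      have := index_last hu; rewrite -Yl /= (negbTE XneY).
      by move=> <-.
    have sp0 : (0 < size p)%N by move: (Yp); case: (p).
    rewrite Yval //.
    rewrite /mpred idx pc.
    - rewrite [if b then _ else _](_ : _ = bitR R (u tt)); last by case: ifP => // _; rewrite C1.
      by rewrite eqxx mulr0.
    - by rewrite prednK.
    - by rewrite prednK.
  move=> r [S [pol [hS hD ->]]]; rewrite muE; apply: sumr_ge0 => u _.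
  by apply: mulr_ge0; [exact: ltW | exact: Yge0].
Qed.
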